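(* Let $x,y\in\mathcal{X}$, let $R'$ be a ranking with $xR'y$, and let $\mathrel{W}$ be a tournament that agrees with $R'$ on every pair $\{z,w\}\nsubseteq[x,y]_{R'}$. Then the outcome under $\mathrel{W}$ of any strategy agrees with $R'$ on every pair $\{z,w\}\nsubseteq[x,y]_{R'}$.
   Context: Let $\mathcal{X}$ be a finite set of alternatives. A proto-ranking is an irreflexive and transitive binary relation on $\mathcal{X}$; a ranking is a total proto-ranking; a tournament is a total and asymmetric binary relation on $\mathcal{X}$. Two relations agree on a pair $\{z,w\}$ if they relate $z$ and $w$ in the same direction. For $xR'y$, $[x,y]_{R'}=\{x,y\}\cup\{c: xR'cR'y\}$. Interaction: given a tournament $\mathrel{W}$, start from $R_0=\varnothing$; in each period with $R_{t-1}$ not total a chair offers a pair $\{u,v\}$ of distinct alternatives unranked by $R_{t-1}$, the winner is $u$ if $u\mathrel{W}v$ and $v$ otherwise, and $R_t$ is the transitive closure of $R_{t-1}\cup\{(\text{winner},\text{loser})\}$; stop when $R_t$ is total. A strategy assigns to each non-terminal history (sequence of (winner, loser) pairs) a pair unranked at it; its outcome under $\mathrel{W}$ is the final ranking. *)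

(* Defs.v *)
From mathcomp Require Import all_boot.
Set Implicit Arguments. Unset Strict Implicit. Unset Printing Implicit Defensive.

Section Defs.
Variable X : finType.

Definition irreflexive_rel (R : rel X) : Prop := forall z, ~~ R z z.
Definition transitive_rel (R : rel X) : Prop :=
  forall a b c, R a b -> R b c -> R a c.
Definition total_rel (R : rel X) : Prop :=
  forall z w, z != w -> R z w || R w z.
Definition asymmetric_rel (R : rel X) : Prop :=
  forall z w, R z w -> ~~ R w z.

Definition proto_ranking (R : rel X) : Prop :=
  irreflexive_rel R /\ transitive_rel R.
Definition ranking (R : rel X) : Prop := proto_ranking R /\ total_rel R.
Definition tournament (W : rel X) : Prop := total_rel W /\ asymmetric_rel W.

Definition agree_on (R R' : rel X) (z w : X) : Prop :=
  R z w = R' z w /\ R w z = R' w z.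

Definition interval (R' : rel X) (x y : X) : pred X :=
  fun c => [|| c == x, c == y | R' x c && R' c y].

(* A history is a sequence of (winner, loser) pairs; R_h is the transitive
   closure of the set of these pairs. *)
Definition history := seq (X * X).
Definition hrel (h : history) : rel X :=
  fun a b => let e : rel X := fun u v => (u, v) \in h in
             [exists c, e a c && connect e c b].

Definition totalb (R : rel X) : bool :=
  [forall z, forall w, (z != w) ==> R z w || R w z].

Definition unranked (R : rel X) (p : X * X) : bool :=
  [&& p.1 != p.2, ~~ R p.1 p.2 & ~~ R p.2 p.1].

Definition strategy := history -> X * X.

Definition valid_strategy (s : strategy) : Prop :=
  forall h : history, ~~ totalb (hrel h) -> unranked (hrel h) (s h).

Definition duel (W : rel X) (p : X * X) : X * X :=
  if W p.1 p.2 then p else (p.2, p.1).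

Fixpoint play (W : rel X) (s : strategy) (n : nat) : history :=
  match n with
  | 0 => [::]
  | n.+1 => let h := play W s n in
            if totalb (hrel h) then h else rcons h (duel W (s h))
  end.

(* The interaction terminates after at most #|X|^2 periods (each period
   ranks a previously unranked ordered pair), so this is the final ranking. *)
Definition outcome (W : rel X) (s : strategy) : rel X :=
  hrel (play W s (#|X| ^ 2)).

End Defs.

(* Main.v *)
Require Import Defs.
From mathcomp Require Import all_boot.

Lemma inIE (X : finType) (R' : rel X) x y c :
  (c \in interval R' x y) = [|| c == x, c == y | R' x c && R' c y].
Proof. by []. Qed.

Lemma inI_lo (X : finType) (R' : rel X) x y c :
  ranking R' -> R' x y -> c \in interval R' x y -> c = x \/ R' x c.
Proof.
move=> _ Rxy; rewrite inIE => /or3P[/eqP->|/eqP->|/andP[]]; by auto.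
Qed.

Arguments inI_lo {X R' x y c}.

Lemma inI_hi (X : finType) (R' : rel X) x y c :
  ranking R' -> R' x y -> c \in interval R' x y -> c = y \/ R' c y.
Proof.
move=> _ Rxy; rewrite inIE => /or3P[/eqP->|/eqP->|/andP[]]; by auto.
Qed.

Arguments inI_hi {X R' x y c}.

Lemma L1 (X : finType) (R' : rel X) x y c d c' :
  ranking R' -> R' x y -> c \in interval R' x y -> d \notin interval R' x y ->
  c' \in interval R' x y -> R' c d -> R' c' d.
Proof.
move=> Rk Rxy cI dI c'I Rcd.
have [Ecd|Ncd] := eqVneq c' d; first by rewrite -Ecd c'I in dI.
have [[irr tr] tot] := Rk; case/orP: (tot _ _ Ncd) => // Rdc'.
exfalso; move/negP: dI; apply.
rewrite inIE; apply/or3P; case: (eqVneq d x) => [->|dx]; first by constructor 1.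
case: (eqVneq d y) => [->|dy]; first by constructor 2.
constructor 3; apply/andP; split.
  by case: (inI_lo Rk Rxy cI) => [<-|Rxc] //; apply: tr Rxc Rcd.
by case: (inI_hi Rk Rxy c'I) => [<-|Rc'y] //; apply: tr Rdc' Rc'y.
Qed.

Arguments L1 {X R' x y c d c'}.

Lemma L2 (X : finType) (R' : rel X) x y c d c' :
  ranking R' -> R' x y -> c \in interval R' x y -> d \notin interval R' x y ->
  c' \in interval R' x y -> R' d c -> R' d c'.
Proof.
move=> Rk Rxy cI dI c'I Rdc.
have [Ecd|Ncd] := eqVneq d c'; first by rewrite Ecd c'I in dI.
have [[irr tr] tot] := Rk; case/orP: (tot _ _ Ncd) => // Rc'd.
exfalso; move/negP: dI; apply.
rewrite inIE; apply/or3P; case: (eqVneq d x) => [->|dx]; first by constructor 1.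
case: (eqVneq d y) => [->|dy]; first by constructor 2.
constructor 3; apply/andP; split.
  by case: (inI_lo Rk Rxy c'I) => [<-|Rxc] //; apply: tr Rxc Rc'd.
by case: (inI_hi Rk Rxy cI) => [<-|Rcy] //; apply: tr Rdc Rcy.
Qed.

Arguments L2 {X R' x y c d c'}.

Definition Qr (X : finType) (R' : rel X) x y : rel X :=
  fun u v => ((u \in interval R' x y) && (v \in interval R' x y)) || R' u v.

Arguments Qr {X}.

Lemma Qtrans (X : finType) (R' : rel X) x y :
  ranking R' -> R' x y -> forall a b c, Qr R' x y a b -> Qr R' x y b c -> Qr R' x y a c.
Proof.
move=> Rk Rxy u v w; rewrite /Qr => /orP H1 /orP H2.
have tr : transitive_rel R' by case: Rk => [[]].
case uI: (u \in interval R' x y); case wI: (w \in interval R' x y) => //=.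
- case: H1 => [/andP[_ vI]|Ruv].
    case: H2 => [/andP[_ wI']|Rvw]; first by rewrite wI' in wI.
    by apply: (L1 Rk Rxy vI _ uI Rvw); rewrite wI.
  case: H2 => [/andP[_ wI']|Rvw]; last exact: tr Ruv Rvw.
  by rewrite wI' in wI.
- case: H1 => [/andP[uI' _]|Ruv]; first by rewrite uI' in uI.
  case: H2 => [/andP[vI _]|Rvw]; last exact: tr Ruv Rvw.
  by apply: (L2 Rk Rxy vI _ wI Ruv); rewrite uI.
- case: H1 => [/andP[uI' _]|Ruv]; first by rewrite uI' in uI.
  case: H2 => [/andP[_ wI']|Rvw]; last exact: tr Ruv Rvw.
  by rewrite wI' in wI.
Qed.

Arguments Qtrans {X R' x y}.

Lemma conn_Q (X : finType) (e Q : rel X) :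
  (forall a b c, Q a b -> Q b c -> Q a c) -> (forall u v, e u v -> Q u v) ->
  forall a b, connect e a b -> a = b \/ Q a b.
Proof.
move=> Qt eQ a b /connectP [p]; elim: p a => [|c p IH] a /=; first by move=> _ ->; left.
move=> /andP[eac pc] Eb; right; case: (IH c pc Eb) => [<-|Qcb]; first exact: eQ.
exact: Qt (eQ _ _ eac) Qcb.
Qed.

Lemma hrel_Q (X : finType) (Q : rel X) (h : history X) :
  (forall a b c, Q a b -> Q b c -> Q a c) -> (forall u v, (u, v) \in h -> Q u v) ->
  forall a b, hrel h a b -> Q a b.
Proof.
move=> Qt eQ a b /existsP[c /andP[eac cb]].
case: (conn_Q X (fun u v => (u, v) \in h) Q Qt eQ _ _ cb) => [<-|Qcb]; first exact: eQ.
exact: Qt (eQ _ _ eac) Qcb.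
Qed.

Lemma hrel_rcons (X : finType) (h : history X) e a b :
  hrel h a b -> hrel (rcons h e) a b.
Proof.
move=> /existsP[c /andP[eac cb]]; apply/existsP; exists c.
rewrite mem_rcons in_cons eac orbT /=.
apply: connect_sub cb => u v huv; apply: connect1.
by rewrite /= mem_rcons in_cons huv orbT.
Qed.

Lemma hrel_new (X : finType) (h : history X) a b : hrel (rcons h (a, b)) a b.
Proof.
by apply/existsP; exists b; rewrite mem_rcons in_cons eqxx /= connect0.
Qed.

Lemma play_count (X : finType) (W : rel X) (s : strategy X) :
  valid_strategy s -> forall n,
  totalb (hrel (play W s n)) || (n <= #|[set p : X * X | hrel (play W s n) p.1 p.2]|).
Proof.
move=> vs; elim=> [|n IH]; first by rewrite orbT.
rewrite /=.
case: ifP => Ht; first by rewrite Ht.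
apply/orP; right.
move: IH; rewrite Ht /= => IH.
apply: leq_ltn_trans IH _; apply: proper_card; apply/properP; split.
  apply/subsetP => p; rewrite !inE; exact: hrel_rcons.
have := vs _ (negbT Ht); rewrite /unranked => /and3P[_ n12 n21].
exists (duel W (s (play W s n))); first by rewrite inE; case: (duel _ _) => a b; exact: hrel_new.
by rewrite inE /duel; case: ifP.
Qed.

Lemma play_total (X : finType) (W : rel X) (s : strategy X) :
  valid_strategy s -> totalb (outcome W s).
Proof.
move=> vs; have := play_count X W s vs (#|X| ^ 2); rewrite /outcome.
set h := play W s (#|X| ^ 2).
case/orP => // H; apply/negPn/negP => Hn.
suff : #|[set p : X * X | hrel h p.1 p.2]| < #|X| ^ 2.
  by rewrite ltnNge H.
rewrite expnS expn1 -card_prod -cardsT; apply: proper_card; apply/properP; split.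
  exact: subsetT.
move/forallPn: Hn => [z /forallPn [w]]; rewrite negb_imply => /andP[zw /norP[n1 n2]].
by exists (z, w); rewrite !inE.
Qed.

Lemma play_Q (X : finType) (x y : X) (R' W : rel X) (s : strategy X) :
  tournament W ->
  (forall z w : X, z != w -> ~~ ((z \in interval R' x y) && (w \in interval R' x y)) ->
     agree_on W R' z w) ->
  valid_strategy s ->
  forall n u v, (u, v) \in play W s n -> Qr R' x y u v.
Proof.
move=> [Wtot Wasym] Wag vs; elim=> [|n IH] u v //=.
case: ifP => Ht; first exact: IH.
rewrite mem_rcons in_cons => /orP[/eqP E|]; last exact: IH.
have := vs _ (negbT Ht); rewrite /unranked => /and3P[n12 _ _].
move: E n12; case: (s (play W s n)) => a b /= E n12.
have [Wuv uv] : W u v /\ u != v.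
  move: E; rewrite /duel /=; case: ifP => Hw [-> ->] //.
  split; last by rewrite eq_sym.
  by move: (Wtot _ _ n12); rewrite Hw.
rewrite /Qr; case: (boolP ((u \in interval R' x y) && (v \in interval R' x y))) => //= nI.
by case: (Wag _ _ uv nI) => <-.
Qed.

Theorem lemma3 (X : finType) (x y : X) (R' W : rel X) (s : strategy X) :
  ranking R' -> R' x y -> tournament W ->
  (forall z w : X, z != w -> ~~ ((z \in interval R' x y) && (w \in interval R' x y)) ->
     agree_on W R' z w) ->
  valid_strategy s ->
  forall z w : X, z != w -> ~~ ((z \in interval R' x y) && (w \in interval R' x y)) ->
    agree_on (outcome W s) R' z w.
Proof.
move=> Rk Rxy Wt Wag vs z w zw nI.
have Qo : forall a b, outcome W s a b -> Qr R' x y a b.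
  apply: hrel_Q; first exact: Qtrans Rk Rxy.
  exact: play_Q Wt Wag vs _.
have sound : forall a b, ~~ ((a \in interval R' x y) && (b \in interval R' x y)) ->
    outcome W s a b -> R' a b.
  by move=> a b nab /Qo; rewrite /Qr (negbTE nab).
have nI' : ~~ ((w \in interval R' x y) && (z \in interval R' x y)) by rewrite andbC.
have [[irr tr] _] := Rk.
have tot := play_total X W s vs.
have comp : forall a b, a != b -> ~~ ((a \in interval R' x y) && (b \in interval R' x y)) ->
    ~~ ((b \in interval R' x y) && (a \in interval R' x y)) ->
    outcome W s a b = R' a b.
  move=> a b ab n1 n2; apply/idP/idP; first exact: sound.
  move=> Rab; move/forallP: tot => /(_ a) /forallP /(_ b); rewrite ab /= => /orP[] // Oba.
  by have := irr a; rewrite (tr _ _ _ Rab (sound _ _ n2 Oba)).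
split; first exact: comp.
by apply: comp => //; rewrite eq_sym.
Qed.
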